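(* Let $\widetilde{E(2)}$ be as in the context, let $K\in(-1,1)$, $K\neq0$, let $b$ solve $b'(v)=\sqrt{\lambda_1^2-K(\lambda_1^2\cos^2 b(v)+\lambda_2^2\sin^2 b(v))}$, $b(0)=0$, let $W>0$ be the unique positive number with $b(W)=\pi$, let $x_3$ solve $x_3'(v)=\frac{\lambda_1\lambda_2K}{\lambda_1+b'(v)}$, $x_3(0)=0$, and let $X:\mathbb{C}\to\widetilde{E(2)}$ be $$X(u+iv)=\Big(\tfrac{1}{\lambda_1^2\lambda_2}\big(\tfrac{1}{\lambda_1}\cos x_3(v)\sin b(v)+\tfrac{1}{\lambda_2}\sin x_3(v)\cos b(v)\big)x_3'(v)\sinh(-\lambda_1u),\ \tfrac{1}{\lambda_1^2\lambda_2}\big(\tfrac{1}{\lambda_1}\sin x_3(v)\sin b(v)-\tfrac{1}{\lambda_2}\cos x_3(v)\cos b(v)\big)x_3'(v)\sinh(-\lambda_1u),\ x_3(v)\Big).$$ Then: (1) the $x_3$-axis $\{(0,0,t):t\in\mathbb{R}\}$ is contained in $X(\mathbb{C})$; (2) for every constant $C\in\mathbb{R}$, the intersection of $X(\mathbb{C})$ with the plane $\{x_3=C\}$ is a straight line (in the coordinates $(x_1,x_2,x_3)$); (3) $X(\mathbb{C})$ is invariant under left multiplication by $(0,0,2x_3(W))$; more precisely $(0,0,2x_3(W))*X(u+iv)=X(u+i(v+2W))$ for all $u,v\in\mathbb{R}$.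
   Context: $\widetilde{E(2)}$ is $\mathbb{R}^3$ with coordinates $(x_1,x_2,x_3)$ and group law $(a_1,b_1,c_1)*(a_2,b_2,c_2)=(a_1+a_2\cos c_1-b_2\sin c_1,\ b_1+a_2\sin c_1+b_2\cos c_1,\ c_1+c_2)$, with the left-invariant metric $\lambda_1^2(\cos x_3\,dx_1+\sin x_3\,dx_2)^2+\lambda_2^2(-\sin x_3\,dx_1+\cos x_3\,dx_2)^2+\frac{1}{\lambda_1^2\lambda_2^2}dx_3^2$, where either $\lambda_1>\lambda_2>0$ or $\lambda_1=\lambda_2=1$. (The solution $b$ is defined on all of $\mathbb{R}$ and is an increasing bijection of $\mathbb{R}$, so $W$ exists and is unique.) *)

(* Defs.v *)
From Stdlib Require Import Reals.
Open Scope R_scope.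

(* Points of the universal cover of E(2), i.e. R^3 with coordinates (x1,x2,x3). *)
Definition pt := (R * R * R)%type.

Definition e2mul (p q : pt) : pt :=
  let '(a1, b1, c1) := p in
  let '(a2, b2, c2) := q in
  (a1 + a2 * cos c1 - b2 * sin c1, b1 + a2 * sin c1 + b2 * cos c1, c1 + c2).

Definition admissible_lambdas (l1 l2 : R) : Prop :=
  (l1 > l2 /\ l2 > 0) \/ (l1 = 1 /\ l2 = 1).

Definition bprime_rhs (l1 l2 K bv : R) : R :=
  sqrt (l1 ^ 2 - K * (l1 ^ 2 * (cos bv) ^ 2 + l2 ^ 2 * (sin bv) ^ 2)).

Definition x3prime (l1 l2 K : R) (b : R -> R) (v : R) : R :=
  l1 * l2 * K / (l1 + bprime_rhs l1 l2 K (b v)).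

Definition Xmap (l1 l2 K : R) (b x3 : R -> R) (u v : R) : pt :=
  let c := / (l1 ^ 2 * l2) * x3prime l1 l2 K b v * sinh (- l1 * u) in
  (c * (/ l1 * cos (x3 v) * sin (b v) + / l2 * sin (x3 v) * cos (b v)),
   c * (/ l1 * sin (x3 v) * sin (b v) - / l2 * cos (x3 v) * cos (b v)),
   x3 v).

Definition Ximage (l1 l2 K : R) (b x3 : R -> R) (p : pt) : Prop :=
  exists u v, Xmap l1 l2 K b x3 u v = p.

(* Main.v *)
From Stdlib Require Import Reals Lra Psatz.
Require Import Defs.
Open Scope R_scope.

Lemma sin_lip a c : Rabs (sin a - sin c) <= Rabs (a - c).
Proof.
  destruct (Rtotal_order a c) as [H|[H|H]].
  - destruct (MVT_cor2 sin cos a c H (fun z _ => derivable_pt_lim_sin z)) as [z [Hz _]].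
    rewrite <- Rabs_Ropp, Ropp_minus_distr, Hz, <- (Rabs_Ropp (a - c)), Ropp_minus_distr, Rabs_mult.
    pose proof (COS_bound z). rewrite (Rabs_pos_eq (c - a)) by lra.
    assert (Rabs (cos z) <= 1) by (apply Rabs_le; lra).
    apply Rmult_le_compat_r with (r := c - a) in H1; lra.
  - subst. replace (c - c) with 0 by ring. replace (sin c - sin c) with 0 by ring. lra.
  - destruct (MVT_cor2 sin cos c a H (fun z _ => derivable_pt_lim_sin z)) as [z [Hz _]].
    rewrite Hz, Rabs_mult.
    pose proof (COS_bound z). rewrite (Rabs_pos_eq (a - c)) by lra.
    assert (Rabs (cos z) <= 1) by (apply Rabs_le; lra).
    apply Rmult_le_compat_r with (r := a - c) in H1; lra.
Qed.

Lemma sqrt_lip m a c : 0 < m -> m <= a -> m <= c ->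
  Rabs (sqrt a - sqrt c) * (2 * sqrt m) <= Rabs (a - c).
Proof.
  intros Hm Ha Hc.
  pose proof (sqrt_le_1_alt _ _ Ha). pose proof (sqrt_le_1_alt _ _ Hc).
  pose proof (sqrt_sqrt a ltac:(lra)). pose proof (sqrt_sqrt c ltac:(lra)).
  replace (a - c) with ((sqrt a - sqrt c) * (sqrt a + sqrt c)) by (transitivity (sqrt a * sqrt a - sqrt c * sqrt c); [ring | rewrite H1, H2; ring]).
  rewrite Rabs_mult. apply Rmult_le_compat_l. apply Rabs_pos.
  rewrite Rabs_pos_eq; [lra|]. pose proof (sqrt_lt_R0 m Hm). lra.
Qed.

Definition Gf l1 l2 K y := l1 ^ 2 - K * (l1 ^ 2 * (cos y) ^ 2 + l2 ^ 2 * (sin y) ^ 2).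

Lemma G_lower l1 l2 K y : 0 < l2 <= l1 -> -1 < K < 1 ->
  l1 ^ 2 * (1 - Rabs K) <= Gf l1 l2 K y.
Proof.
  intros Hl HK. unfold Gf.
  pose proof (sin2_cos2 y). unfold Rsqr in H.
  set (s := sin y) in *. set (co := cos y) in *.
  assert (HQ0 : 0 <= l1 ^ 2 * co ^ 2 + l2 ^ 2 * s ^ 2).
  { pose proof (pow2_ge_0 (l1*co)); pose proof (pow2_ge_0 (l2*s)). rewrite !Rpow_mult_distr in *. lra. }
  assert (HQ1 : l1 ^ 2 * co ^ 2 + l2 ^ 2 * s ^ 2 <= l1 ^ 2).
  { assert (l2^2 <= l1^2) by (simpl; nra). pose proof (pow2_ge_0 s).
    replace (l1^2) with (l1^2 * (s*s + co*co)) at 2 by (rewrite H; ring).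
    simpl; nra. }
  pose proof (Rle_abs K). pose proof (Rabs_pos K).
  nra.
Qed.

Lemma G_upper l1 l2 K y : 0 < l2 <= l1 -> -1 < K < 1 ->
  Gf l1 l2 K y <= 2 * l1 ^ 2.
Proof.
  intros Hl HK. unfold Gf.
  pose proof (sin2_cos2 y). unfold Rsqr in H.
  set (s := sin y) in *. set (co := cos y) in *.
  assert (HQ0 : 0 <= l1 ^ 2 * co ^ 2 + l2 ^ 2 * s ^ 2).
  { pose proof (pow2_ge_0 (l1*co)); pose proof (pow2_ge_0 (l2*s)). rewrite !Rpow_mult_distr in *. lra. }
  assert (HQ1 : l1 ^ 2 * co ^ 2 + l2 ^ 2 * s ^ 2 <= l1 ^ 2).
  { assert (l2^2 <= l1^2) by (simpl; nra). pose proof (pow2_ge_0 s).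
    replace (l1^2) with (l1^2 * (s*s + co*co)) at 2 by (rewrite H; ring).
    simpl; nra. }
  nra.
Qed.

Lemma G_lip l1 l2 K a c : 0 < l2 <= l1 -> -1 < K < 1 ->
  Rabs (Gf l1 l2 K a - Gf l1 l2 K c) <= 2 * (l1 ^ 2 + l2 ^ 2) * Rabs (a - c).
Proof.
  intros Hl HK. unfold Gf.
  pose proof (sin2_cos2 a). pose proof (sin2_cos2 c). unfold Rsqr in *.
  replace (l1 ^ 2 - K * (l1 ^ 2 * cos a ^ 2 + l2 ^ 2 * sin a ^ 2) -
     (l1 ^ 2 - K * (l1 ^ 2 * cos c ^ 2 + l2 ^ 2 * sin c ^ 2)))
   with ((K * (l1 ^ 2 - l2 ^ 2)) * ((sin a + sin c) * (sin a - sin c))).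
  2:{ assert (E1 : cos a ^ 2 = 1 - sin a ^ 2) by (simpl; lra).
      assert (E2 : cos c ^ 2 = 1 - sin c ^ 2) by (simpl; lra).
      rewrite E1, E2; ring. }
  rewrite !Rabs_mult.
  pose proof (sin_lip a c).
  pose proof (SIN_bound a). pose proof (SIN_bound c).
  assert (Rabs (sin a + sin c) <= 2) by (apply Rabs_le; lra).
  assert (Rabs K <= 1) by (apply Rabs_le; lra).
  rewrite (Rabs_pos_eq (l1^2 - l2^2)) by nra.
  pose proof (Rabs_pos K). pose proof (Rabs_pos (sin a + sin c)). pose proof (Rabs_pos (sin a - sin c)).
  pose proof (Rabs_pos (a - c)).
  assert (Rabs K * (l1 ^ 2 - l2 ^ 2) <= l1^2 + l2^2) by nra.
  assert (Rabs (sin a + sin c) * Rabs (sin a - sin c) <= 2 * Rabs (a - c)) by nra.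
  assert (0 <= Rabs K * (l1 ^ 2 - l2 ^ 2)) by (apply Rmult_le_pos; [lra | simpl; nra]).
  replace (2 * (l1 ^ 2 + l2 ^ 2) * Rabs (a - c)) with ((l1 ^ 2 + l2 ^ 2) * (2 * Rabs (a - c))) by ring.
  apply Rmult_le_compat; auto. apply Rmult_le_pos; auto.
Qed.
Lemma dext (f g : R -> R) x l l' : (forall y, f y = g y) -> l = l' ->
  derivable_pt_lim f x l -> derivable_pt_lim g x l'.
Proof.
  intros Hfg Hl H eps He; subst l'; destruct (H eps He) as [d Hd]; exists d.
  intros h Hh Hhd; rewrite <- !Hfg; auto.
Qed.

Lemma dsq_exp (y1 y2 : R -> R) (D1 D2 : R) k t :
  derivable_pt_lim y1 t D1 -> derivable_pt_lim y2 t D2 ->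
  derivable_pt_lim (fun t => (y1 t - y2 t) * (y1 t - y2 t) * exp (k * t)) t
    ((2 * (y1 t - y2 t) * (D1 - D2) + k * ((y1 t - y2 t) * (y1 t - y2 t))) * exp (k * t)).
Proof.
  intros H1 H2.
  pose proof (derivable_pt_lim_minus _ _ _ _ _ H1 H2) as Hd.
  pose proof (derivable_pt_lim_mult _ _ _ _ _ Hd Hd) as Hs.
  pose proof (derivable_pt_lim_scal _ k _ _ (derivable_pt_lim_id t)) as Hl.
  pose proof (derivable_pt_lim_comp _ _ _ _ _ Hl (derivable_pt_lim_exp _)) as He.
  pose proof (derivable_pt_lim_mult _ _ _ _ _ Hs He) as Hp.
  eapply dext; [ | | exact Hp].
  - intros y; unfold mult_fct, minus_fct, comp, mult_real_fct, id; reflexivity.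
  - unfold mult_fct, minus_fct, comp, mult_real_fct, id; ring.
Qed.

Lemma ode_uniq (F : R -> R -> R) (L : R) (y1 y2 : R -> R) (t0 : R) :
  0 <= L ->
  (forall t a c, Rabs (F t a - F t c) <= L * Rabs (a - c)) ->
  (forall t, derivable_pt_lim y1 t (F t (y1 t))) ->
  (forall t, derivable_pt_lim y2 t (F t (y2 t))) ->
  y1 t0 = y2 t0 -> forall t, y1 t = y2 t.
Proof.
  intros HL HF H1 H2 H0 t.
  assert (key : forall s, Rabs ((y1 s - y2 s) * (F s (y1 s) - F s (y2 s))) <=
                 L * ((y1 s - y2 s) * (y1 s - y2 s))).
  { intros s. rewrite Rabs_mult.
    pose proof (HF s (y1 s) (y2 s)).
    pose proof (Rabs_pos (y1 s - y2 s)).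
    replace ((y1 s - y2 s) * (y1 s - y2 s)) with (Rabs (y1 s - y2 s) * Rabs (y1 s - y2 s)).
    2:{ rewrite <- Rabs_mult. apply Rabs_pos_eq. pose proof (Rle_0_sqr (y1 s - y2 s)); unfold Rsqr in *; lra. }
    nra. }
  assert (Hsq : forall s, (y1 s - y2 s) * (y1 s - y2 s) = 0 -> y1 s = y2 s).
  { intros s Hs. nra. }
  destruct (Rtotal_order t t0) as [Hlt | [Heq | Hgt]].
  - (* t < t0 : use k = 2L, increasing *)
    apply Hsq.
    destruct (MVT_cor2 _ _ t t0 Hlt (fun c _ => dsq_exp y1 y2 _ _ (2*L) c (H1 c) (H2 c)))
      as [c [Hc _]].
    rewrite H0 in Hc. replace (y2 t0 - y2 t0) with 0 in Hc by ring.
    pose proof (key c). pose proof (Rle_abs (- ((y1 c - y2 c) * (F c (y1 c) - F c (y2 c))))).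
    rewrite Rabs_Ropp in H3.
    pose proof (exp_pos (2*L*c)). pose proof (exp_pos (2*L*t)).
    assert (0 <= (2 * (y1 c - y2 c) * (F c (y1 c) - F c (y2 c)) +
        2 * L * ((y1 c - y2 c) * (y1 c - y2 c))) * exp (2 * L * c)).
    { apply Rmult_le_pos; lra. }
    assert (0 <= (y1 t - y2 t) * (y1 t - y2 t)) by (pose proof (Rle_0_sqr (y1 t - y2 t)); unfold Rsqr in *; lra).
    nra.
  - subst; auto.
  - apply Hsq.
    destruct (MVT_cor2 _ _ t0 t Hgt (fun c _ => dsq_exp y1 y2 _ _ (-(2*L)) c (H1 c) (H2 c)))
      as [c [Hc _]].
    rewrite H0 in Hc. replace (y2 t0 - y2 t0) with 0 in Hc by ring.
    pose proof (key c). pose proof (Rle_abs ((y1 c - y2 c) * (F c (y1 c) - F c (y2 c)))).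
    pose proof (exp_pos (-(2*L)*c)). pose proof (exp_pos (-(2*L)*t)).
    assert ((2 * (y1 c - y2 c) * (F c (y1 c) - F c (y2 c)) +
        - (2 * L) * ((y1 c - y2 c) * (y1 c - y2 c))) * exp (-(2 * L) * c) <= 0).
    { rewrite <- (Rmult_0_l (exp (-(2*L)*c))). apply Rmult_le_compat_r; lra. }
    assert (0 <= (y1 t - y2 t) * (y1 t - y2 t)) by (pose proof (Rle_0_sqr (y1 t - y2 t)); unfold Rsqr in *; lra).
    nra.
Qed.

Lemma F_lip l1 l2 K a c : 0 < l2 <= l1 -> -1 < K < 1 ->
  Rabs (bprime_rhs l1 l2 K a - bprime_rhs l1 l2 K c) <=
  (2 * (l1 ^ 2 + l2 ^ 2) / (2 * sqrt (l1 ^ 2 * (1 - Rabs K)))) * Rabs (a - c).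
Proof.
  intros Hl HK.
  assert (Hm : 0 < l1 ^ 2 * (1 - Rabs K)).
  { apply Rmult_lt_0_compat. simpl; nra. 
    assert (Rabs K < 1) by (apply Rabs_def1; lra). lra. }
  pose proof (sqrt_lt_R0 _ Hm).
  pose proof (sqrt_lip _ (Gf l1 l2 K a) (Gf l1 l2 K c) Hm (G_lower _ _ _ _ Hl HK) (G_lower _ _ _ _ Hl HK)).
  pose proof (G_lip l1 l2 K a c Hl HK).
  unfold bprime_rhs. fold (Gf l1 l2 K a) (Gf l1 l2 K c).
  unfold Rdiv. rewrite Rmult_comm, <- Rmult_assoc.
  apply Rmult_le_reg_r with (2 * sqrt (l1 ^ 2 * (1 - Rabs K))). lra.
  rewrite Rmult_assoc, Rinv_l by lra. lra.
Qed.

Lemma incr_surj (f f' : R -> R) c : 0 < c ->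
  (forall v, derivable_pt_lim f v (f' v)) -> (forall v, c <= f' v) ->
  (forall t, exists v, f v = t) /\ (forall a b, a < b -> f a < f b).
Proof.
  intros Hc Hd Hf.
  assert (Hinc : forall a b, a < b -> f a + c * (b - a) <= f b).
  { intros a b Hab. destruct (MVT_cor2 f f' a b Hab (fun z _ => Hd z)) as [z [Hz _]].
    pose proof (Hf z). nra. }
  split.
  - intros t. set (T := (Rabs t + 1 + Rabs (f 0)) / c).
    assert (HT : 0 < T) by (unfold T; pose proof (Rabs_pos t); pose proof (Rabs_pos (f 0));
       apply Rdiv_lt_0_compat; lra).
    assert (cT : c * T = Rabs t + 1 + Rabs (f 0)) by (unfold T; field; lra).
    pose proof (Hinc 0 T HT). pose proof (Hinc (-T) 0 ltac:(lra)).
    pose proof (Rle_abs t). pose proof (Rle_abs (-t)). rewrite Rabs_Ropp in H2.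
    pose proof (Rle_abs (f 0)). pose proof (Rle_abs (- f 0)). rewrite Rabs_Ropp in H4.
    destruct (IVT (fun v => f v - t) (-T) T) as [z [_ Hz]].
    + intros x. apply derivable_continuous_pt. exists (f' x - 0).
      apply derivable_pt_lim_minus. apply Hd. apply derivable_pt_lim_const.
    + lra.
    + nra.
    + nra.
    + exists z; lra.
  - intros a b Hab. pose proof (Hinc a b Hab). nra.
Qed.

Theorem theorem4p2 (l1 l2 K : R) (b x3 : R -> R) (W : R) :
  admissible_lambdas l1 l2 ->
  -1 < K < 1 -> K <> 0 ->
  (forall v, derivable_pt_lim b v (bprime_rhs l1 l2 K (b v))) ->
  b 0 = 0 ->
  W > 0 -> b W = PI ->
  (forall v, derivable_pt_lim x3 v (x3prime l1 l2 K b v)) ->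
  x3 0 = 0 ->
  (* (1) the x3-axis lies in X(C) *)
  (forall t : R, Ximage l1 l2 K b x3 (0, 0, t)) /\
  (* (2) each horizontal slice {x3 = C} of X(C) is a straight line *)
  (forall C : R, exists p1 p2 d1 d2 : R, (d1 <> 0 \/ d2 <> 0) /\
     forall x1 x2 : R,
       Ximage l1 l2 K b x3 (x1, x2, C) <->
       exists s : R, x1 = p1 + s * d1 /\ x2 = p2 + s * d2) /\
  (* (3) invariance under left multiplication by (0,0,2 x3(W)) *)
  (forall u v : R,
     e2mul (0, 0, 2 * x3 W) (Xmap l1 l2 K b x3 u v) = Xmap l1 l2 K b x3 u (v + 2 * W)).
Proof.
  intros Hadm HK HK0 Hb Hb0 HW HbW Hx Hx0.
  assert (Hl : 0 < l2 <= l1) by (destruct Hadm; lra).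
  assert (HF0 : forall y, 0 <= bprime_rhs l1 l2 K y) by (intros; apply sqrt_pos).
  assert (HF2 : forall y, bprime_rhs l1 l2 K y <= 2 * l1).
  { intros y. pose proof (G_upper l1 l2 K y Hl HK). pose proof (G_lower l1 l2 K y Hl HK).
    assert (0 <= Gf l1 l2 K y).
    { assert (Rabs K < 1) by (apply Rabs_def1; lra).
      assert (0 <= l1 ^ 2 * (1 - Rabs K)) by (apply Rmult_le_pos; [simpl; nra | lra]). lra. }
    pose proof (sqrt_sqrt _ H1). pose proof (HF0 y). unfold bprime_rhs in *. fold (Gf l1 l2 K y) in *.
    simpl in *. nra. }
  assert (Hper : forall y, bprime_rhs l1 l2 K (y + PI) = bprime_rhs l1 l2 K y).
  { intros y. unfold bprime_rhs. rewrite neg_cos, neg_sin. f_equal. ring. }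
  assert (HD : forall v, x3prime l1 l2 K b v * (l1 + bprime_rhs l1 l2 K (b v)) = l1 * l2 * K).
  { intros v. unfold x3prime. field. pose proof (HF0 (b v)). lra. }
  assert (Hxnz : forall v, x3prime l1 l2 K b v <> 0).
  { intros v E. pose proof (HD v). rewrite E in H.
    assert (l1 * l2 * K <> 0) by (repeat apply Rmult_integral_contrapositive_currified; lra). lra. }
  assert (Hms : (forall t, exists v, x3 v = t) /\ (forall a c, x3 a = x3 c -> a = c)).
  { destruct (Rtotal_order K 0) as [Kn | [Kz | Kp]]; [ | lra | ].
    - destruct (incr_surj (fun v => - x3 v) (fun v => - x3prime l1 l2 K b v) (- (l2 * K) / 3))
        as [S I].
      + apply Rdiv_lt_0_compat; nra.
      + intros v. apply (dext (- x3)%F _ _ (- x3prime l1 l2 K b v)); [intros; reflexivity | reflexivity |].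
        apply derivable_pt_lim_opp, Hx.
      + intros v. pose proof (HD v). pose proof (HF0 (b v)). pose proof (HF2 (b v)).
        set (D := l1 + bprime_rhs l1 l2 K (b v)) in *.
        apply Rmult_le_reg_r with (3 * D). unfold D; lra.
        assert (0 <= (3 * l1 - D) * (l2 * Rabs K)).
        { apply Rmult_le_pos. unfold D; lra. pose proof (Rabs_pos K). nra. }
        replace (Rabs K) with (if Rlt_dec K 0 then - K else K) in H2
          by (destruct (Rlt_dec K 0); [rewrite Rabs_left | rewrite Rabs_right]; lra).
        destruct (Rlt_dec K 0); field_simplify; nra.
      + split.
        * intros t. destruct (S (- t)) as [v Hv]. exists v. lra.
        * intros a c E. destruct (Rtotal_order a c) as [H|[H|H]]; auto.
          -- pose proof (I a c H). lra.
          -- pose proof (I c a H). lra.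
    - destruct (incr_surj x3 (fun v => x3prime l1 l2 K b v) ((l2 * K) / 3))
        as [S I].
      + apply Rdiv_lt_0_compat; nra.
      + exact Hx.
      + intros v. pose proof (HD v). pose proof (HF0 (b v)). pose proof (HF2 (b v)).
        set (D := l1 + bprime_rhs l1 l2 K (b v)) in *.
        apply Rmult_le_reg_r with (3 * D). unfold D; lra.
        assert (0 <= (3 * l1 - D) * (l2 * Rabs K)).
        { apply Rmult_le_pos. unfold D; lra. pose proof (Rabs_pos K). nra. }
        replace (Rabs K) with (if Rlt_dec K 0 then - K else K) in H2
          by (destruct (Rlt_dec K 0); [rewrite Rabs_left | rewrite Rabs_right]; lra).
        destruct (Rlt_dec K 0); field_simplify; nra.
      + split; auto.
        intros a c E. destruct (Rtotal_order a c) as [H|[H|H]]; auto.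
        -- pose proof (I a c H). lra.
        -- pose proof (I c a H). lra. }
  destruct Hms as [Hsurj Hinj].
  assert (Hm : 0 < l1 ^ 2 * (1 - Rabs K)).
  { assert (Rabs K < 1) by (apply Rabs_def1; lra). apply Rmult_lt_0_compat; [simpl; nra | lra]. }
  assert (HLc : 0 <= 2 * (l1 ^ 2 + l2 ^ 2) / (2 * sqrt (l1 ^ 2 * (1 - Rabs K)))).
  { pose proof (sqrt_lt_R0 _ Hm). apply Rlt_le, Rdiv_lt_0_compat; [simpl; nra | lra]. }
  assert (Hsh : forall (f : R -> R) (f' : R) v c, derivable_pt_lim f (v + c) f' ->
            derivable_pt_lim (fun t => f (t + c)) v f').
  { intros f f' v c H.
    pose proof (derivable_pt_lim_plus _ _ v _ _ (derivable_pt_lim_id v) (derivable_pt_lim_const c v)).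
    pose proof (derivable_pt_lim_comp _ f v _ f' H0 H) as H1.
    apply (dext (comp f (id + fct_cte c)%F) _ _ (f' * (1 + 0))); [intros; reflexivity | ring |].
    exact H1. }
  assert (Hb1 : forall v, b (v + W) = b v + PI).
  { apply (ode_uniq (fun _ y => bprime_rhs l1 l2 K y) _ _ _ 0 HLc).
    - intros; apply F_lip; auto.
    - intros t. apply Hsh, Hb.
    - intros t. apply (dext (b + fct_cte PI)%F _ _ (bprime_rhs l1 l2 K (b t) + 0)).
      intros; reflexivity. rewrite Hper; ring.
      apply derivable_pt_lim_plus. apply Hb. apply derivable_pt_lim_const.
    - rewrite Rplus_0_l, Hb0, HbW; ring. }
  assert (Hxp1 : forall v, x3prime l1 l2 K b (v + W) = x3prime l1 l2 K b v).
  { intros v. unfold x3prime. rewrite Hb1, Hper. reflexivity. }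
  assert (Hx1 : forall v, x3 (v + W) = x3 v + x3 W).
  { apply (ode_uniq (fun t _ => x3prime l1 l2 K b (t + W)) 0 _ _ 0 (Rle_refl 0)).
    - intros. replace (x3prime l1 l2 K b (t + W) - x3prime l1 l2 K b (t + W)) with 0 by ring.
      rewrite Rabs_R0. pose proof (Rabs_pos (a - c)). lra.
    - intros t. apply Hsh, Hx.
    - intros t. apply (dext (x3 + fct_cte (x3 W))%F _ _ (x3prime l1 l2 K b t + 0)).
      intros; reflexivity. rewrite Hxp1; ring.
      apply derivable_pt_lim_plus. apply Hx. apply derivable_pt_lim_const.
    - rewrite Rplus_0_l, Hx0; ring. }
  assert (Hb2 : forall v, b (v + 2 * W) = b v + PI + PI).
  { intros v. replace (v + 2 * W) with (v + W + W) by ring. rewrite !Hb1. ring. }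
  assert (Hx2 : forall v, x3 (v + 2 * W) = x3 v + 2 * x3 W).
  { intros v. replace (v + 2 * W) with (v + W + W) by ring. rewrite !Hx1. ring. }
  assert (Hxp2 : forall v, x3prime l1 l2 K b (v + 2 * W) = x3prime l1 l2 K b v).
  { intros v. replace (v + 2 * W) with (v + W + W) by ring. rewrite !Hxp1. ring. }
  split; [| split].
  - intros t. destruct (Hsurj t) as [v Hv]. exists 0, v. unfold Xmap.
    replace (- l1 * 0) with 0 by ring.
    assert (sinh 0 = 0) by (unfold sinh; rewrite Ropp_0; field).
    rewrite H, Hv. apply (f_equal2 pair); [apply (f_equal2 pair)|]; try ring; try reflexivity.
  - intros C. destruct (Hsurj C) as [v0 Hv0].
    set (k := / (l1 ^ 2 * l2) * x3prime l1 l2 K b v0).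
    set (A := / l1 * cos (x3 v0) * sin (b v0) + / l2 * sin (x3 v0) * cos (b v0)).
    set (B := / l1 * sin (x3 v0) * sin (b v0) - / l2 * cos (x3 v0) * cos (b v0)).
    exists 0, 0, (k * A), (k * B). split.
    + assert (Hk : k <> 0).
      { unfold k. apply Rmult_integral_contrapositive_currified; auto.
        apply Rinv_neq_0_compat. apply Rmult_integral_contrapositive_currified; simpl; nra. }
      destruct (Req_dec (k * A) 0) as [HA|HA]; [right; intro HB | left; exact HA].
      apply Rmult_integral in HA; apply Rmult_integral in HB.
      destruct HA as [HA|HA]; [contradiction|]. destruct HB as [HB|HB]; [contradiction|].
      pose proof (sin2_cos2 (x3 v0)). pose proof (sin2_cos2 (b v0)). unfold Rsqr in *.
      assert (E1 : sin (b v0) = l1 * (cos (x3 v0) * A + sin (x3 v0) * B)).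
      { unfold A, B. transitivity (sin (b v0) * (sin (x3 v0) * sin (x3 v0) + cos (x3 v0) * cos (x3 v0))).
        rewrite H; ring. field; lra. }
      assert (E2 : cos (b v0) = l2 * (sin (x3 v0) * A - cos (x3 v0) * B)).
      { unfold A, B. transitivity (cos (b v0) * (sin (x3 v0) * sin (x3 v0) + cos (x3 v0) * cos (x3 v0))).
        rewrite H; ring. field; lra. }
      rewrite HA, HB in E1, E2. 
      replace (l1 * (cos (x3 v0) * 0 + sin (x3 v0) * 0)) with 0 in E1 by ring.
      replace (l2 * (sin (x3 v0) * 0 - cos (x3 v0) * 0)) with 0 in E2 by ring.
      rewrite E1, E2 in H0. lra.
    + intros x1 x2. split.
      * intros [u [v H]]. unfold Xmap in H. injection H as H1 H2 H3.
        assert (v = v0) by (apply Hinj; lra). subst v.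
        exists (sinh (- l1 * u)). rewrite <- H1, <- H2. unfold k, A, B. split; field; repeat split; lra.
      * intros [s [E1 E2]]. exists (- arcsinh s / l1), v0. unfold Xmap.
        replace (- l1 * (- arcsinh s / l1)) with (arcsinh s) by (field; lra).
        rewrite sinh_arcsinh, E1, E2. unfold k, A, B. rewrite Hv0. apply (f_equal2 pair); [apply (f_equal2 pair)|]; try ring; try reflexivity.
  - intros u v. unfold e2mul, Xmap.
    rewrite Hx2, Hb2, Hxp2, !neg_sin, !neg_cos, cos_plus, sin_plus.
    apply (f_equal2 pair); [apply (f_equal2 pair)|]; try ring; try reflexivity.
Qed.
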